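(* In the construction described in the context, for each $k\in\mathbb{N}$ the map $\pi_k:\mathcal P_\infty\to[0,1]$ (the $k$-th coordinate) is continuous and extends continuously to $P_\infty$. Moreover, for every $\bar x\in P_\infty\setminus i_k(P_k)$ one has $\pi_k(\bar x)\in A_k:=\pi_k(Q_k)$.
   Context: Construction. Let $(e_n)$ be the canonical basis of $\ell^1(\mathbb{N})$; $\alpha(t)=t$ on $[0,\frac12]$, $\alpha(t)=1-t$ on $[\frac12,1]$; $S_n=\{te_1+\alpha(t)e_{n+1}:t\in[0,1]\}$; $x_n=(\frac12-\frac1{2^n})e_1$, $x_\infty=\frac12e_1$; $Y=\bigcup_{n\ge1}(2^{-(n+1)}S_n+x_n)\cup\{x_\infty\}$ with the $\ell^1$ metric $\theta$. $Y$ is the image of an arc-length parametrized injective curve $\gamma:[0,1]\to Y$ with $\gamma(0)=0$, $\gamma(1)=x_\infty$. For $r>0$ let $\theta_r(s,t)=r\,\theta(\gamma(s/r),\gamma(t/r))$ on $[0,r]$. Set $P_1=[0,1]$, $\rho_1=\theta_1$, $L_1=\{1\}$. Given $(P_k,\rho_k)$ with $P_k\subset[0,1]^k$ and $L_k\subset P_k$, let $\pi_k$ denote the $k$-th coordinate, choose a countable dense subset $Q_k=\{q_n:n\in\mathbb{N}\}$ (distinct $q_n$) of $P_k\setminus L_k$ with $\pi_k$ injective on $Q_k$ and $0\notin\pi_k(Q_k)$, set $r_n=2^{-(n+k)}$, $d_n=\theta_{r_n}$, and let $P_{k+1}=\{(x,0):x\in P_k\setminus Q_k\}\cup\{(q_n,y):n\in\mathbb{N},y\in[0,r_n]\}\subset[0,1]^{k+1}$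 with metric $\rho_{k+1}((x_1,y_1),(x_2,y_2))$ equal to $d_n(y_1,y_2)$ if $x_1=x_2=q_n$; $d_n(y_1,0)+\rho_k(x_1,x_2)+d_m(0,y_2)$ if $x_1=q_n,x_2=q_m$, $n\ne m$; $d_n(y_1,0)+\rho_k(x_1,x_2)$ if $x_1=q_n$, $x_2\notin Q_k$ (and symmetrically); $\rho_k(x_1,x_2)$ if $x_1,x_2\notin Q_k$. Let $L_{k+1}=(L_k\times\{0\})\cup\{(q_n,r_n):n\in\mathbb{N}\}$. Let $i_k:P_k\to[0,1]^{\mathbb{N}}$, $i_k(x)=(x_1,\dots,x_k,0,0,\dots)$; $\mathcal P_\infty=\bigcup_k i_k(P_k)$ with the metric $\rho_\infty(x,y)=\rho_k(i_k^{-1}x,i_k^{-1}y)$ for $x,y\in i_k(P_k)$ (well defined since the natural embeddings $P_k\to P_{k'}$ are isometries); $(P_\infty,\rho_\infty)$ is the completion of $(\mathcal P_\infty,\rho_\infty)$, and $i_k$ is regarded as a map into $P_\infty$. On $\mathcal P_\infty\subset[0,1]^{\mathbb{N}}$, $\pi_k$ is the $k$-th coordinate. *)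

(* Defs.v *)
From Stdlib Require Import Reals Lra ClassicalEpsilon.
From Coquelicot Require Import Coquelicot.
Open Scope R_scope.

(* Points of [0,1]^N (and of l^1(N)) are represented as sequences nat -> R,
   with 0-based indices: paper coordinate j (j >= 1) is index j-1.
   Thus the paper's e_1 is index 0, e_{n+1} is index n.
   A point of P_k is represented by i_k(x), i.e. a sequence that vanishes
   at all indices >= k. *)
Definition seqR := nat -> R.

Definition l1dist (x y : seqR) : R := Series (fun i => Rabs (x i - y i)).

(* The arc-length parametrization gamma : [0,1] -> Y:
   piece n (n >= 1), i.e. 2^{-(n+1)} S_n + x_n, is traversed for
   s in [1 - 2/2^n, 1 - 1/2^n]; gamma(s) = (s/2) e_1 + h_n(s) e_{n+1},
   where h_n is the tent function of slope 1/2 on that interval. *)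
Definition piece_lo (n : nat) : R := 1 - 2 / 2 ^ n.
Definition piece_hi (n : nat) : R := 1 - 1 / 2 ^ n.
Definition hgt (n : nat) (s : R) : R :=
  Rmax 0 (Rmin (s - piece_lo n) (piece_hi n - s)) / 2.
Definition gamma (s : R) : seqR :=
  fun i => match i with O => s / 2 | S _ => hgt i s end.

Definition theta (r s t : R) : R := r * l1dist (gamma (s / r)) (gamma (t / r)).

(* Truncation: keeps indices < k (paper coordinates 1..k). *)
Definition trunc (k : nat) (z : seqR) : seqR :=
  fun i => if (i <? k)%nat then z i else 0.

(* The choice data: q k m is the paper's q_{m+1} in Q_k (for k >= 1). *)
(* r_n at level k, with n = m+1 :  2^{-(n+k)} *)
Definition rr (k m : nat) : R := (1 / 2) ^ (m + 1 + k).

Definition decP (P : Prop) : {P} + {~ P} := excluded_middle_informative P.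
Definition inQ (q : nat -> nat -> seqR) (k : nat) (x : seqR) : Prop :=
  exists m, x = q k m.
Definition idx (q : nat -> nat -> seqR) (k : nat) (x : seqR) : nat :=
  epsilon (inhabits 0%nat) (fun m => x = q k m).

(* Stage j of the recursion is the paper's level j+1. *)
Fixpoint Pst (q : nat -> nat -> seqR) (j : nat) : seqR -> Prop :=
  match j with
  | O => fun z => 0 <= z 0%nat <= 1 /\ (forall i, (1 <= i)%nat -> z i = 0)
  | S j' => fun z =>
      let k := S j' in
      Pst q j' (trunc k z) /\ (forall i, (k < i)%nat -> z i = 0) /\
      (z k = 0 \/ exists m, trunc k z = q k m /\ 0 <= z k <= rr k m)
  end.

Fixpoint rhost (q : nat -> nat -> seqR) (j : nat) : seqR -> seqR -> R :=
  match j with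
  | O => fun z1 z2 => theta 1 (z1 0%nat) (z2 0%nat)
  | S j' => fun z1 z2 =>
      let k := S j' in
      let x1 := trunc k z1 in let x2 := trunc k z2 in
      let y1 := z1 k in let y2 := z2 k in
      let n1 := idx q k x1 in let n2 := idx q k x2 in
      let d := fun n a b => theta (rr k n) a b in
      if decP (inQ q k x1) then
        if decP (inQ q k x2) then
          if Nat.eq_dec n1 n2 then d n1 y1 y2
          else d n1 y1 0 + rhost q j' x1 x2 + d n2 0 y2
        else d n1 y1 0 + rhost q j' x1 x2
      else if decP (inQ q k x2) then rhost q j' x1 x2 + d n2 0 y2
      else rhost q j' x1 x2
  end.

Fixpoint Lst (q : nat -> nat -> seqR) (j : nat) : seqR -> Prop :=
  match j with
  | O => fun z => z 0%nat = 1 /\ (forall i, (1 <= i)%nat -> z i = 0)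
  | S j' => fun z =>
      let k := S j' in
      (forall i, (k < i)%nat -> z i = 0) /\
      ((z k = 0 /\ Lst q j' (trunc k z)) \/
       exists m, trunc k z = q k m /\ z k = rr k m)
  end.

Definition PP q (k : nat) := Pst q (Nat.pred k).
Definition RHO q (k : nat) := rhost q (Nat.pred k).
Definition LL q (k : nat) := Lst q (Nat.pred k).
Definition pi (k : nat) (z : seqR) : R := z (Nat.pred k).

Definition admissible (q : nat -> nat -> seqR) : Prop :=
  forall k, (1 <= k)%nat ->
    (forall m, PP q k (q k m) /\ ~ LL q k (q k m)) /\
    (forall m m', q k m = q k m' -> m = m') /\
    (forall m m', pi k (q k m) = pi k (q k m') -> m = m') /\
    (forall m, pi k (q k m) <> 0) /\
    (forall x, PP q k x -> ~ LL q k x ->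
       forall eps, 0 < eps -> exists m, RHO q k x (q k m) < eps).

Definition Pinf q (z : seqR) : Prop := exists k, (1 <= k)%nat /\ PP q k z.
Definition rhoinf q (x y : seqR) : R :=
  RHO q (epsilon (inhabits 1%nat)
           (fun k => (1 <= k)%nat /\ PP q k x /\ PP q k y)) x y.

Definition is_metric {X : Type} (d : X -> X -> R) : Prop :=
  (forall x y, 0 <= d x y) /\ (forall x y, d x y = 0 <-> x = y) /\
  (forall x y, d x y = d y x) /\ (forall x y z, d x z <= d x y + d y z).

Definition complete_metric {X : Type} (d : X -> X -> R) : Prop :=
  forall u : nat -> X,
    (forall eps, 0 < eps -> exists N, forall m n, (N <= m)%nat -> (N <= n)%nat ->
        d (u m) (u n) < eps) ->
    exists l, forall eps, 0 < eps -> exists N, forall n, (N <= n)%nat -> d (u n) l < eps.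

Definition is_completion q {X : Type} (d : X -> X -> R) (j : seqR -> X) : Prop :=
  is_metric d /\ complete_metric d /\
  (forall x y, Pinf q x -> Pinf q y -> d (j x) (j y) = rhoinf q x y) /\
  (forall x eps, 0 < eps -> exists z, Pinf q z /\ d x (j z) < eps).

(* Main.v *)
Require Import Defs.
From Stdlib Require Import Reals.
From Stdlib Require Import Lra Lia Classical ClassicalEpsilon FunctionalExtensionality.
From Coquelicot Require Import Coquelicot.
Open Scope R_scope.

Lemma hgt_bnd n s : 0 <= hgt n s <= (/2)^n / 4.
Proof.
  unfold hgt, piece_lo, piece_hi.
  rewrite pow_inv.
  assert (H : 0 < 2 ^ n) by (apply pow_lt; lra).
  assert (E1: 1 / 2 ^ n = / 2 ^ n) by (field; lra).
  assert (E2: 2 / 2 ^ n = 2 * / 2 ^ n) by (field; lra).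
  rewrite E1, E2. assert (0 < / 2 ^ n) by (apply Rinv_0_lt_compat; auto).
  set (t := / 2 ^ n) in *.
  unfold Rmax, Rmin; repeat destruct Rle_dec; lra.
Qed.

Lemma hgt_lip n a b : Rabs (hgt n a - hgt n b) <= Rabs (a - b) / 2.
Proof.
  unfold hgt.
  set (lo := piece_lo n); set (hi := piece_hi n).
  unfold Rmax, Rmin; repeat destruct Rle_dec; unfold Rabs; repeat destruct Rcase_abs; lra.
Qed.

Lemma sqrt_pow_n x n : 0 <= x -> sqrt (x ^ n) = (sqrt x) ^ n.
Proof.
  intros Hx; induction n; simpl.
  - apply sqrt_1.
  - rewrite sqrt_mult; auto. rewrite IHn; auto. apply pow_le; auto.
Qed.

Definition sh := sqrt (/2).

Lemma sh_bnd : 0 <= sh <= 3/4.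
Proof.
  unfold sh; split. apply sqrt_pos.
  rewrite <- (sqrt_square (3/4)) by lra. apply sqrt_le_1_alt; lra.
Qed.

Definition bnd (D : R) (i : nat) := D / 2 * (/2) ^ i + sqrt (D / 8) * sh ^ i.

Lemma ex_bnd D : ex_series (bnd D).
Proof.
  unfold bnd. apply (ex_series_plus (fun i => D/2 * (/2)^i) (fun i => sqrt (D/8) * sh ^ i)).
  - apply (ex_series_scal_l (D/2) (fun i => (/2)^i)). apply ex_series_geom. rewrite Rabs_pos_eq; lra.
  - apply (ex_series_scal_l (sqrt (D/8)) (fun i => sh^i)). apply ex_series_geom.
    pose proof sh_bnd. rewrite Rabs_pos_eq; lra.
Qed.

Lemma series_bnd D : Series (bnd D) = D / 2 * 2 + sqrt (D / 8) * / (1 - sh).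
Proof.
  unfold bnd. rewrite Series_plus.
  - rewrite (Series_scal_l (D/2) (fun i => (/2)^i)), (Series_scal_l _ (fun i => sh^i)).
    rewrite (is_series_unique _ _ (is_series_geom (/2) ltac:(rewrite Rabs_pos_eq; lra))).
    pose proof sh_bnd.
    rewrite (is_series_unique _ _ (is_series_geom sh ltac:(rewrite Rabs_pos_eq; lra))).
    f_equal. f_equal. field.
  - apply (ex_series_scal_l (D/2) (fun i => (/2)^i)). apply ex_series_geom. rewrite Rabs_pos_eq; lra.
  - apply (ex_series_scal_l (sqrt (D/8)) (fun i => sh^i)). apply ex_series_geom.
    pose proof sh_bnd. rewrite Rabs_pos_eq; lra.
Qed.

Lemma term_bnd a b i : 0 <= Rabs (gamma a i - gamma b i) <= bnd (Rabs (a - b)) i.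
Proof.
  split. apply Rabs_pos.
  unfold bnd. pose proof (Rabs_pos (a - b)) as Hab.
  assert (0 <= sqrt (Rabs (a - b) / 8) * sh ^ i).
  { apply Rmult_le_pos. apply sqrt_pos. apply pow_le. apply sh_bnd. }
  assert (0 < (/2) ^ i) by (apply pow_lt; lra).
  destruct i as [|i].
  - simpl. replace (a/2 - b/2) with ((a-b)/2) by field.
    unfold Rdiv. rewrite Rabs_mult, (Rabs_pos_eq (/2)) by lra. lra.
  - simpl gamma.
    set (x := Rabs (hgt (S i) a - hgt (S i) b)).
    assert (H1 : x <= Rabs (a - b) / 2) by apply hgt_lip.
    assert (H2 : x <= (/2) ^ (S i) / 4).
    { pose proof (hgt_bnd (S i) a). pose proof (hgt_bnd (S i) b). unfold x.
      unfold Rabs; destruct Rcase_abs; lra. }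
    assert (Hx0 : 0 <= x) by apply Rabs_pos.
    assert (x <= sqrt (Rabs (a - b) / 8) * sh ^ S i).
    { unfold sh. rewrite <- sqrt_pow_n by lra. rewrite <- sqrt_mult.
      2: lra. 2: apply pow_le; lra.
      rewrite <- (sqrt_square x) by auto. apply sqrt_le_1_alt.
      apply Rle_trans with (Rabs (a-b)/2 * ((/2)^S i / 4)).
      - apply Rmult_le_compat; auto.
      - lra. }
    assert (0 <= Rabs (a - b) / 2 * (/ 2) ^ S i). { apply Rmult_le_pos; lra. }
    lra.
Qed.

Lemma series_zero : Series (fun _ : nat => 0) = 0.
Proof.
  rewrite (Series_ext _ (fun n : nat => 0 * 0)) by (intros; ring).
  rewrite (Series_scal_l 0 (fun _ => 0)). ring.
Qed.

Lemma ex_l1 a b : ex_series (fun i => Rabs (gamma a i - gamma b i)).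
Proof.
  apply (@ex_series_le _ R_CompleteNormedModule _ (bnd (Rabs (a-b)))). 2: apply ex_bnd.
  intros n. apply Rle_trans with (2 := proj2 (term_bnd a b n)). right. apply Rabs_Rabsolu.
Qed.

Lemma l1_lower a b : Rabs (a - b) / 2 <= l1dist (gamma a) (gamma b).
Proof.
  unfold l1dist. rewrite Series_incr_1 by apply ex_l1.
  simpl gamma at 1 2.
  replace (a/2 - b/2) with ((a-b)/2) by field.
  unfold Rdiv at 2. rewrite Rabs_mult, (Rabs_pos_eq (/2)) by lra.
  assert (0 <= Series (fun k => Rabs (gamma a (S k) - gamma b (S k)))).
  { replace 0 with (Series (fun _ : nat => 0)).
    2: { apply series_zero. }
    apply Series_le.
    - intros; split; [lra| apply Rabs_pos].
    - apply (@ex_series_le _ R_CompleteNormedModule _ (fun k => bnd (Rabs (a-b)) (S k))).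
      + intros n. apply Rle_trans with (2 := proj2 (term_bnd a b (S n))). right. apply Rabs_Rabsolu.
      + apply (proj1 (@ex_series_incr_1 _ R_NormedModule (bnd (Rabs (a-b))))). apply ex_bnd. }
  unfold Rdiv; lra.
Qed.

Lemma l1_upper a b : l1dist (gamma a) (gamma b) <= Rabs (a - b) + 4 * sqrt (Rabs (a - b) / 8).
Proof.
  unfold l1dist. eapply Rle_trans. apply Series_le. apply term_bnd. apply ex_bnd.
  rewrite series_bnd. pose proof sh_bnd.
  assert (/ (1 - sh) <= 4).
  { replace 4 with (/ / 4) by field. apply Rinv_le_contravar; lra. }
  assert (0 <= sqrt (Rabs (a - b) / 8)) by apply sqrt_pos.
  assert (sqrt (Rabs (a - b) / 8) * / (1 - sh) <= sqrt (Rabs (a - b) / 8) * 4)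
    by (apply Rmult_le_compat_l; auto).
  lra.
Qed.

Lemma l1_same a : l1dist (gamma a) (gamma a) = 0.
Proof.
  unfold l1dist. rewrite (Series_ext _ (fun n => 0 * 0)).
  - rewrite (Series_scal_l 0 (fun _ => 0)). ring.
  - intros; rewrite Rminus_diag, Rabs_R0; ring.
Qed.

Lemma l1_sym a b : l1dist (gamma a) (gamma b) = l1dist (gamma b) (gamma a).
Proof. unfold l1dist; apply Series_ext; intros; apply Rabs_minus_sym. Qed.

Lemma theta_same r s : theta r s s = 0.
Proof. unfold theta; rewrite l1_same; ring. Qed.

Lemma theta_sym r s t : theta r s t = theta r t s.
Proof. unfold theta; rewrite l1_sym; ring. Qed.

Lemma theta_lower r s t : 0 < r -> Rabs (s - t) / 2 <= theta r s t.
Proof.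
  intros Hr. unfold theta.
  pose proof (l1_lower (s/r) (t/r)).
  replace (s/r - t/r) with ((s-t) * /r) in H by (field; lra).
  rewrite Rabs_mult, (Rabs_pos_eq (/r)) in H by (apply Rlt_le, Rinv_0_lt_compat; auto).
  apply Rmult_le_compat_l with (r := r) in H; [|lra].
  replace (r * (Rabs (s - t) * / r / 2)) with (Rabs (s-t)/2) in H by (field; lra). lra.
Qed.

Lemma theta_nonneg r s t : 0 < r -> 0 <= theta r s t.
Proof. intros Hr; pose proof (theta_lower r s t Hr); pose proof (Rabs_pos (s-t)); lra. Qed.

Lemma theta_upper r s t : 0 < r -> r <= 1 ->
  theta r s t <= Rabs (s - t) + 4 * sqrt (Rabs (s - t)).
Proof.
  intros Hr Hr1. unfold theta.
  pose proof (l1_upper (s/r) (t/r)).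
  replace (s/r - t/r) with ((s-t) * /r) in H by (field; lra).
  rewrite Rabs_mult, (Rabs_pos_eq (/r)) in H by (apply Rlt_le, Rinv_0_lt_compat; auto).
  apply Rmult_le_compat_l with (r := r) in H; [|lra].
  eapply Rle_trans; [exact H|].
  set (D := Rabs (s - t)). assert (0 <= D) by apply Rabs_pos.
  assert (E: r * (D * / r) = D) by (field; lra).
  assert (r * sqrt (D * / r / 8) <= sqrt D).
  { rewrite <- (sqrt_square r) at 1 by lra. rewrite <- sqrt_mult.
    - apply sqrt_le_1_alt.
      replace (r * r * (D * / r / 8)) with (r * D / 8) by (field; lra).
      assert (r * D <= D). { rewrite <- (Rmult_1_l D) at 2. apply Rmult_le_compat_r; lra. }
      lra.
    - nra.
    - apply Rmult_le_pos; [apply Rmult_le_pos; [auto| apply Rlt_le, Rinv_0_lt_compat; auto]|lra]. }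
  nra.
Qed.

Lemma theta_cont eps : 0 < eps -> exists delta, 0 < delta /\
  forall r s t, 0 < r -> r <= 1 -> Rabs (s - t) < delta -> theta r s t < eps.
Proof.
  intros He. exists (Rmin (eps/2) ((eps/8) * (eps/8))). split.
  { apply Rmin_glb_lt; nra. }
  intros r s t Hr Hr1 Hd. pose proof (theta_upper r s t Hr Hr1).
  assert (Rabs (s-t) < eps/2) by (eapply Rlt_le_trans; [exact Hd| apply Rmin_l]).
  assert (sqrt (Rabs (s - t)) <= eps / 8).
  { rewrite <- (sqrt_square (eps/8)) by lra. apply sqrt_le_1_alt.
    eapply Rle_trans; [apply Rlt_le, Hd| apply Rmin_r]. }
  lra.
Qed.

Definition rstep q k (R0 : seqR -> seqR -> R) x1 x2 y1 y2 : R :=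
  let n1 := idx q k x1 in let n2 := idx q k x2 in
  let d := fun n a b => theta (rr k n) a b in
  if decP (inQ q k x1) then
    if decP (inQ q k x2) then
      if Nat.eq_dec n1 n2 then d n1 y1 y2
      else d n1 y1 0 + R0 x1 x2 + d n2 0 y2
    else d n1 y1 0 + R0 x1 x2
  else if decP (inQ q k x2) then R0 x1 x2 + d n2 0 y2
  else R0 x1 x2.

Lemma rhost_S q j z w : rhost q (S j) z w =
  rstep q (S j) (rhost q j) (trunc (S j) z) (trunc (S j) w) (z (S j)) (w (S j)).
Proof. reflexivity. Qed.

Lemma rr_pos k m : 0 < rr k m.
Proof. unfold rr; apply pow_lt; lra. Qed.

Lemma rr_le1 k m : rr k m <= 1.
Proof.
  unfold rr. generalize (m + 1 + k)%nat. intros n; induction n; simpl; [lra|].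
  assert (0 <= (1/2)^n) by (apply pow_le; lra). nra.
Qed.

Lemma dnn k n a b : 0 <= theta (rr k n) a b.
Proof. apply theta_nonneg, rr_pos. Qed.

Lemma dlow k n a b : Rabs (a - b) / 2 <= theta (rr k n) a b.
Proof. apply theta_lower, rr_pos. Qed.

Lemma idx_spec q k x : inQ q k x -> q k (idx q k x) = x.
Proof.
  intros H. unfold idx. symmetry.
  apply (epsilon_spec (inhabits 0%nat) (fun m => x = q k m)). exact H.
Qed.

Lemma idx_eq q k x1 x2 : inQ q k x1 -> inQ q k x2 -> idx q k x1 = idx q k x2 -> x1 = x2.
Proof.
  intros H1 H2 E. rewrite <- (idx_spec q k x1 H1), <- (idx_spec q k x2 H2), E. reflexivity.
Qed.

Lemma rstep_nonneg q k R0 x1 x2 y1 y2 : 0 <= R0 x1 x2 -> 0 <= rstep q k R0 x1 x2 y1 y2.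
Proof.
  intros H. unfold rstep.
  pose proof (dnn k (idx q k x1) y1 y2). pose proof (dnn k (idx q k x1) y1 0).
  pose proof (dnn k (idx q k x2) 0 y2).
  repeat destruct decP; try destruct Nat.eq_dec; lra.
Qed.

Lemma rhost_nonneg q j z w : 0 <= rhost q j z w.
Proof.
  revert z w; induction j; intros z w.
  - simpl. apply theta_nonneg; lra.
  - rewrite rhost_S. apply rstep_nonneg. apply IHj.
Qed.

Lemma rhost_refl q j z : rhost q j z z = 0.
Proof.
  revert z; induction j; intros z.
  - simpl. apply theta_same.
  - rewrite rhost_S. unfold rstep.
    repeat destruct decP; try destruct Nat.eq_dec; try congruence; try apply theta_same.
    all: try apply IHj.
Qed.

Lemma rstep_ge q k R0 x1 x2 y1 y2 : (forall x, R0 x x = 0) -> 0 <= R0 x1 x2 ->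
  R0 x1 x2 <= rstep q k R0 x1 x2 y1 y2.
Proof.
  intros H0 H. unfold rstep.
  pose proof (dnn k (idx q k x1) y1 y2). pose proof (dnn k (idx q k x1) y1 0).
  pose proof (dnn k (idx q k x2) 0 y2).
  destruct (decP (inQ q k x1)) as [i1|i1]; destruct (decP (inQ q k x2)) as [i2|i2];
    try destruct Nat.eq_dec as [e|e]; try lra.
  pose proof (idx_eq q k x1 x2 i1 i2 e). subst x2. rewrite H0. lra.
Qed.

Lemma rhost_trunc q j z w :
  rhost q j (trunc (S j) z) (trunc (S j) w) <= rhost q (S j) z w.
Proof. rewrite rhost_S. apply rstep_ge. apply rhost_refl. apply rhost_nonneg. Qed.

Lemma rstep_sep q k R0 x1 x2 y1 y2 : 0 <= R0 x1 x2 -> inQ q k x1 -> x1 <> x2 ->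
  theta (rr k (idx q k x1)) y1 0 <= rstep q k R0 x1 x2 y1 y2.
Proof.
  intros H i1 ne. unfold rstep.
  pose proof (dnn k (idx q k x2) 0 y2).
  destruct (decP (inQ q k x1)) as [_|c]; [|contradiction].
  destruct (decP (inQ q k x2)) as [i2|i2]; try destruct Nat.eq_dec as [e|e]; try lra.
  exfalso; apply ne, (idx_eq q k x1 x2 i1 i2 e).
Qed.

Lemma rstep_sym q k R0 x1 x2 y1 y2 : R0 x1 x2 = R0 x2 x1 ->
  rstep q k R0 x1 x2 y1 y2 = rstep q k R0 x2 x1 y2 y1.
Proof.
  intros H. unfold rstep.
  pose proof (theta_sym (rr k (idx q k x1)) y1 0).
  pose proof (theta_sym (rr k (idx q k x2)) 0 y2).
  pose proof (theta_sym (rr k (idx q k x2)) y1 y2).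
  destruct (decP (inQ q k x1)); destruct (decP (inQ q k x2));
   repeat destruct Nat.eq_dec; try congruence; try lra.
  all: rewrite e; lra.
Qed.

Lemma rhost_sym q j z w : rhost q j z w = rhost q j w z.
Proof.
  revert z w; induction j; intros z w.
  - simpl. apply theta_sym.
  - rewrite !rhost_S. apply rstep_sym. apply IHj.
Qed.

Lemma rstep_zero q k R0 x1 x2 : (forall x, R0 x x = 0) -> rstep q k R0 x1 x2 0 0 = R0 x1 x2.
Proof.
  intros H0. unfold rstep. rewrite !theta_same.
  destruct (decP (inQ q k x1)) as [i1|i1]; destruct (decP (inQ q k x2)) as [i2|i2];
    try destruct Nat.eq_dec as [e|e]; try ring.
  pose proof (idx_eq q k x1 x2 i1 i2 e). subst x2. rewrite H0. ring.
Qed.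

Lemma Pst_zero q j z : Pst q j z -> forall i, (j < i)%nat -> z i = 0.
Proof.
  destruct j; simpl.
  - intros [_ H] i Hi. apply H. lia.
  - intros [_ [H _]]. exact H.
Qed.

Lemma trunc_at k z i : (i < k)%nat -> trunc k z i = z i.
Proof. intros H. unfold trunc. destruct (Nat.ltb_spec i k); [reflexivity| lia]. Qed.

Lemma trunc_out k z i : (k <= i)%nat -> trunc k z i = 0.
Proof. intros H. unfold trunc. destruct (Nat.ltb_spec i k); [lia| reflexivity]. Qed.

Lemma trunc_id k z : (forall i, (k <= i)%nat -> z i = 0) -> trunc k z = z.
Proof.
  intros H. apply functional_extensionality; intros i. unfold trunc.
  destruct (Nat.ltb_spec i k); [reflexivity| symmetry; apply H; lia].
Qed.

Lemma trunc_trunc k k' z : (k <= k')%nat -> trunc k (trunc k' z) = trunc k z.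
Proof.
  intros H. apply functional_extensionality; intros i. unfold trunc.
  destruct (Nat.ltb_spec i k); destruct (Nat.ltb_spec i k'); try reflexivity; lia.
Qed.

Lemma Pst_trunc_id q j z : Pst q j z -> trunc (S j) z = z.
Proof. intros H. apply trunc_id. intros i Hi. apply (Pst_zero q j z H). lia. Qed.

Lemma Pst_up q j z : Pst q j z -> Pst q (S j) z.
Proof.
  intros H. simpl. rewrite (Pst_trunc_id q j z H). split; [exact H|]. split.
  - intros i Hi. apply (Pst_zero q j z H). lia.
  - left. apply (Pst_zero q j z H). lia.
Qed.

Lemma Pst_mono q j j' z : (j <= j')%nat -> Pst q j z -> Pst q j' z.
Proof. intros Hle Hz; induction Hle; auto; apply Pst_up; auto. Qed.

Lemma Pst_down q j z : Pst q (S j) z -> Pst q j (trunc (S j) z).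
Proof. simpl. tauto. Qed.

Lemma rhost_up q j z w : Pst q j z -> Pst q j w -> rhost q (S j) z w = rhost q j z w.
Proof.
  intros Hz Hw. rewrite rhost_S, (Pst_trunc_id q j z Hz), (Pst_trunc_id q j w Hw).
  rewrite (Pst_zero q j z Hz (S j)) by lia. rewrite (Pst_zero q j w Hw (S j)) by lia.
  apply rstep_zero, rhost_refl.
Qed.

Lemma rhost_mono q j j' z w : (j <= j')%nat -> Pst q j z -> Pst q j w ->
  rhost q j' z w = rhost q j z w.
Proof.
  induction 1; intros Hz Hw; auto.
  rewrite rhost_up; auto; apply (Pst_mono q j); auto.
Qed.

Lemma rhoinf_eq q L z w : Pst q L z -> Pst q L w -> rhoinf q z w = rhost q L z w.
Proof.
  intros Hz Hw. unfold rhoinf.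
  set (k0 := epsilon _ _).
  assert (Hk : (1 <= k0)%nat /\ PP q k0 z /\ PP q k0 w).
  { apply (epsilon_spec (inhabits 1%nat) (fun k => (1 <= k)%nat /\ PP q k z /\ PP q k w)).
    exists (S L). unfold PP; simpl; split; [lia| auto]. }
  destruct Hk as [H1 [Hz0 Hw0]]. unfold PP, RHO in *.
  set (L0 := Nat.pred k0) in *.
  rewrite <- (rhost_mono q L0 (Nat.max L0 L) z w) by (auto; lia).
  rewrite <- (rhost_mono q L (Nat.max L0 L) z w) by (auto; lia). reflexivity.
Qed.

Lemma Pinf_Pst q z : Pinf q z -> exists L, Pst q L z.
Proof. intros [k [_ H]]. exists (Nat.pred k). exact H. Qed.

Lemma common q z w : Pinf q z -> Pinf q w -> forall L0, exists L, (L0 <= L)%nat /\ Pst q L z /\ Pst q L w.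
Proof.
  intros Hz Hw L0. destruct (Pinf_Pst q z Hz) as [a Ha]. destruct (Pinf_Pst q w Hw) as [b Hb].
  exists (Nat.max L0 (Nat.max a b)). split; [lia|]. split.
  - apply (Pst_mono q a); auto; lia.
  - apply (Pst_mono q b); auto; lia.
Qed.

Lemma Pst_top q j z : Pst q (S j) z -> z (S j) = 0 \/ inQ q (S j) (trunc (S j) z).
Proof.
  simpl. intros [_ [_ [H1|[m [H2 _]]]]]; auto. right. exists m. exact H2.
Qed.

Lemma rstep_top q k R0 x1 x2 y1 y2 : 0 <= R0 x1 x2 ->
  (y1 = 0 \/ inQ q k x1) -> (y2 = 0 \/ inQ q k x2) ->
  Rabs (y1 - y2) <= 2 * rstep q k R0 x1 x2 y1 y2.
Proof.
  intros H H1 H2. unfold rstep.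
  pose proof (dlow k (idx q k x1) y1 y2). pose proof (dlow k (idx q k x1) y1 0).
  pose proof (dlow k (idx q k x2) 0 y2).
  pose proof (dnn k (idx q k x1) y1 0). pose proof (dnn k (idx q k x2) 0 y2).
  assert (Rabs (y1 - y2) <= Rabs (y1 - 0) + Rabs (0 - y2)).
  { replace (y1 - y2) with ((y1 - 0) + (0 - y2)) by ring. apply Rabs_triang. }
  destruct (decP (inQ q k x1)) as [i1|i1]; destruct (decP (inQ q k x2)) as [i2|i2];
    try destruct Nat.eq_dec as [e|e]; try lra.
  - destruct H2 as [H2|H2]; [|contradiction]. subst y2. lra.
  - destruct H1 as [H1|H1]; [|contradiction]. subst y1. lra.
  - destruct H1 as [H1|H1]; [|contradiction]. destruct H2 as [H2|H2]; [|contradiction].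
    subst. rewrite Rminus_diag, Rabs_R0. lra.
Qed.

Lemma coord_lip q j z w c : Pst q j z -> Pst q j w -> (c <= j)%nat ->
  Rabs (z c - w c) <= 2 * rhost q j z w.
Proof.
  revert z w c; induction j; intros z w c Hz Hw Hc.
  - assert (c = 0%nat) by lia. subst c. simpl.
    pose proof (theta_lower 1 (z 0%nat) (w 0%nat) ltac:(lra)). lra.
  - destruct (Nat.eq_dec c (S j)) as [e|ne].
    + subst c. rewrite rhost_S. apply rstep_top. apply rhost_nonneg.
      apply Pst_top; auto. apply Pst_top; auto.
    + rewrite <- (trunc_at (S j) z c) by lia. rewrite <- (trunc_at (S j) w c) by lia.
      eapply Rle_trans. apply IHj; try apply Pst_down; auto; lia.
      pose proof (rhost_trunc q j z w). lra.
Qed.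

Lemma rhost_def q j z w : Pst q j z -> Pst q j w -> rhost q j z w = 0 -> z = w.
Proof.
  intros Hz Hw H. apply functional_extensionality; intros c.
  destruct (Nat.le_gt_cases c j).
  - pose proof (coord_lip q j z w c Hz Hw H0). rewrite H in H1.
    pose proof (Rabs_pos (z c - w c)).
    assert (Rabs (z c - w c) = 0) by lra.
    apply Rabs_eq_0 in H3. lra.
  - rewrite (Pst_zero q j z Hz c), (Pst_zero q j w Hw c); auto.
Qed.

Lemma top_sep q j z w : Pst q (S j) z -> trunc (S j) z <> trunc (S j) w ->
  Rabs (z (S j)) <= 2 * rhost q (S j) z w.
Proof.
  intros Hz ne. destruct (Pst_top q j z Hz) as [e|i].
  - rewrite e, Rabs_R0. pose proof (rhost_nonneg q (S j) z w). lra.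
  - rewrite rhost_S. eapply Rle_trans; [|apply Rmult_le_compat_l; [lra|apply rstep_sep]].
    + pose proof (dlow (S j) (idx q (S j) (trunc (S j) z)) (z (S j)) 0).
      rewrite Rminus_0_r in H. lra.
    + apply rhost_nonneg.
    + exact i.
    + exact ne.
Qed.

Lemma trunc_trunc2 k k' z : (k <= k')%nat -> trunc k' (trunc k z) = trunc k z.
Proof. intros H. apply trunc_id. intros i Hi. apply trunc_out. lia. Qed.

Lemma adm_nz q (Hq : admissible q) J m : q (S J) m J <> 0.
Proof.
  destruct (Hq (S J) ltac:(lia)) as [_ [_ [_ [Hnz _]]]]. apply (Hnz m).
Qed.

Lemma adm_inj q (Hq : admissible q) K m m' : (1 <= K)%nat -> q K m = q K m' -> m = m'.
Proof.
  intros HK. destruct (Hq K HK) as [_ [Hi _]]. apply Hi.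
Qed.

Lemma adm_P q (Hq : admissible q) J m : Pst q J (q (S J) m).
Proof.
  destruct (Hq (S J) ltac:(lia)) as [HP _]. apply (HP m).
Qed.

Lemma minG q (Hq : admissible q) c J w : (c <= J)%nat -> Pst q J w ->
  Pst q c w \/ exists m, trunc (S c) w = q (S c) m.
Proof.
  intros Hle. revert w. induction Hle as [|J Hle IH]; intros w Hw; [left; exact Hw|].
  pose proof (Pst_down q J w Hw) as Ht.
  destruct (IH _ Ht) as [Hc|[m Hm]].
  - simpl in Hw. destruct Hw as [_ [Hz [H0|[m [Hm _]]]]].
    + left. assert (E : trunc (S J) w = w).
      { apply trunc_id. intros i Hi. destruct (Nat.eq_dec i (S J)); [subst; auto| apply Hz; lia]. }
      rewrite E in Hc. exact Hc.
    + destruct (Nat.eq_dec J c) as [e|ne].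
      * subst J. right. exists m. exact Hm.
      * exfalso. apply (adm_nz q Hq J m). rewrite <- Hm.
        apply (Pst_zero q c _ Hc). lia.
  - right. exists m. rewrite <- Hm. symmetry. apply trunc_trunc. lia.
Qed.

Lemma rstep_T q k R0 a p a' y1 y2 : (forall x, R0 x x = 0) -> (forall x y, 0 <= R0 x y) ->
  a <> a' -> R0 a p <= R0 a a' -> rstep q k R0 a p y1 0 <= rstep q k R0 a a' y1 y2.
Proof.
  intros H0 Hn ne Hle. unfold rstep. rewrite !theta_same.
  pose proof (dnn k (idx q k a) y1 0). pose proof (dnn k (idx q k a') 0 y2).
  pose proof (Hn a p). pose proof (Hn a a').
  destruct (decP (inQ q k a)) as [ia|ia]; destruct (decP (inQ q k p)) as [ip|ip];
    destruct (decP (inQ q k a')) as [ia'|ia'];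
    repeat match goal with |- context [Nat.eq_dec ?x ?y] => destruct (Nat.eq_dec x y) end;
    try lra;
    try (exfalso; apply ne; apply (idx_eq q k a a'); auto; fail).
Qed.

Lemma treeT q c J w w' : (c <= J)%nat -> Pst q J w -> Pst q J w' ->
  trunc (S c) w <> trunc (S c) w' -> rhost q J w (trunc (S c) w) <= rhost q J w w'.
Proof.
  intros Hle. revert w w'. induction Hle as [|J Hle IH]; intros w w' Hw Hw' ne.
  - rewrite (Pst_trunc_id q c w Hw), rhost_refl. apply rhost_nonneg.
  - rewrite !rhost_S. rewrite (trunc_trunc2 (S c) (S J)) by lia.
    rewrite (trunc_out (S c) w (S J)) by lia.
    rewrite <- (trunc_trunc (S c) (S J) w) at 1 by lia.
    apply rstep_T.
    + apply rhost_refl.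
    + apply rhost_nonneg.
    + intros E. apply ne. rewrite <- (trunc_trunc (S c) (S J) w) by lia.
      rewrite <- (trunc_trunc (S c) (S J) w') by lia. rewrite E; reflexivity.
    + apply IH; try apply Pst_down; auto.
      rewrite !trunc_trunc by lia. exact ne.
Qed.

Lemma cauchy_R (v : nat -> R) :
  (forall eps, 0 < eps -> exists N, forall n m, (N <= n)%nat -> (N <= m)%nat -> Rabs (v n - v m) < eps) ->
  exists l, forall eps, 0 < eps -> exists N, forall n, (N <= n)%nat -> Rabs (v n - l) < eps.
Proof.
  intros H. destruct (Rcomplete.R_complete v) as [l Hl].
  - intros eps He. destruct (H eps He) as [N HN]. exists N. intros n m Hn Hm. unfold Rdist. apply HN; auto.
  - exists l. intros eps He. destruct (Hl eps He) as [N HN]. exists N. intros n Hn.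
    specialize (HN n Hn). unfold Rdist in HN. exact HN.
Qed.

Lemma lim_bounds (v : nat -> R) l a b :
  (forall eps, 0 < eps -> exists N, forall n, (N <= n)%nat -> Rabs (v n - l) < eps) ->
  (forall n, a <= v n <= b) -> a <= l <= b.
Proof.
  intros H Hb. split.
  - destruct (Rle_lt_dec a l) as [h|h]; auto. exfalso.
    destruct (H (a - l) ltac:(lra)) as [N HN]. specialize (HN N (le_n N)). specialize (Hb N).
    unfold Rabs in HN; destruct Rcase_abs in HN; lra.
  - destruct (Rle_lt_dec l b) as [h|h]; auto. exfalso.
    destruct (H (l - b) ltac:(lra)) as [N HN]. specialize (HN N (le_n N)). specialize (Hb N).
    unfold Rabs in HN; destruct Rcase_abs in HN; lra.
Qed.

Definition Cauchy_r q j (u : nat -> seqR) := forall eps, 0 < eps -> exists N, forall n m,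
  (N <= n)%nat -> (N <= m)%nat -> rhost q j (u n) (u m) < eps.
Definition Conv_r q j (u : nat -> seqR) z := forall eps, 0 < eps -> exists N, forall n,
  (N <= n)%nat -> rhost q j (u n) z < eps.

Lemma rstep_ub q k R0 x1 x2 y1 y2 A B C : x1 <> x2 ->
  (inQ q k x1 -> theta (rr k (idx q k x1)) y1 0 <= A) -> R0 x1 x2 <= B ->
  (inQ q k x2 -> theta (rr k (idx q k x2)) 0 y2 <= C) -> 0 <= A -> 0 <= C ->
  rstep q k R0 x1 x2 y1 y2 <= A + B + C.
Proof.
  intros ne HA HB HC A0 C0. unfold rstep.
  destruct (decP (inQ q k x1)) as [i1|i1]; destruct (decP (inQ q k x2)) as [i2|i2];
    try destruct Nat.eq_dec as [e|e].
  - exfalso; apply ne, (idx_eq q k x1 x2 i1 i2 e).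
  - specialize (HA i1); specialize (HC i2); lra.
  - specialize (HA i1); lra.
  - specialize (HC i2); lra.
  - lra.
Qed.

Lemma complete q (Hq : admissible q) j u : (forall n, Pst q j (u n)) -> Cauchy_r q j u ->
  exists z, Pst q j z /\ Conv_r q j u z.
Proof.
  revert u. induction j as [|j IH]; intros u Hu Hc.
  -
    destruct (cauchy_R (fun n => u n 0%nat)) as [l Hl].
    { intros eps He. destruct (Hc (eps/2) ltac:(lra)) as [N HN]. exists N. intros n m Hn Hm.
      pose proof (coord_lip q 0 (u n) (u m) 0 (Hu n) (Hu m) (le_n 0)).
      specialize (HN n m Hn Hm). lra. }
    assert (Hb : 0 <= l <= 1).
    { apply (lim_bounds _ l 0 1 Hl). intros n. destruct (Hu n) as [H _]. exact H. }
    exists (fun i => match i with O => l | S _ => 0 end). split.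
    + simpl. split; auto. intros i Hi. destruct i; [lia| reflexivity].
    + intros eps He. destruct (theta_cont eps He) as [d [Hd Hd']].
      destruct (Hl d Hd) as [N HN]. exists N. intros n Hn. simpl.
      apply Hd'; try lra. apply HN; auto.
  -
    set (K := S j).
    set (t := fun n => trunc K (u n)).
    set (y := fun n => u n K).
    assert (Ht : forall n, Pst q j (t n)) by (intros n; apply Pst_down, Hu).
    destruct (IH t Ht) as [x' [Hx' Hconv]].
    { intros eps He. destruct (Hc eps He) as [N HN]. exists N. intros n m Hn Hm.
      eapply Rle_lt_trans; [apply rhost_trunc| apply HN; auto]. }
    set (yh := fun n => if decP (t n = x') then y n else 0).
    assert (Hyc : forall n m, Rabs (yh n - yh m) <= 2 * rhost q K (u n) (u m)).
    { intros n m. unfold yh.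
      destruct (decP (t n = x')) as [en|en]; destruct (decP (t m = x')) as [em|em].
      - unfold y. apply coord_lip; auto.
      - rewrite Rminus_0_r. apply top_sep; auto. intros E; apply em; rewrite <- en; unfold t, K in *; rewrite E; reflexivity.
      - rewrite Rminus_0_l, Rabs_Ropp, rhost_sym. apply top_sep; auto. intros E; apply en; rewrite <- em; unfold t, K in *; rewrite E; reflexivity.
      - rewrite Rminus_diag, Rabs_R0. pose proof (rhost_nonneg q K (u n) (u m)). lra. }
    destruct (cauchy_R yh) as [ys Hys].
    { intros eps He. destruct (Hc (eps/2) ltac:(lra)) as [N HN]. exists N. intros n m Hn Hm.
      specialize (HN n m Hn Hm). specialize (Hyc n m). fold K in HN. lra. }
    set (z := fun i => if Nat.eq_dec i K then ys else x' i).
    assert (Htz : trunc K z = x').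
    { apply functional_extensionality; intros i. unfold trunc, z.
      destruct (Nat.ltb_spec i K); destruct (Nat.eq_dec i K); try lia; auto.
      all: symmetry; apply (Pst_zero q j x' Hx'); unfold K in *; lia. }
    assert (HzK : z K = ys) by (unfold z; destruct (Nat.eq_dec K K); congruence).
    exists z. split.
    + simpl. fold K. rewrite Htz. split; [exact Hx'|]. split.
      { intros i Hi. unfold z. destruct (Nat.eq_dec i K); [unfold K in *; lia|].
        apply (Pst_zero q j x' Hx'). unfold K in *; lia. }
      rewrite HzK.
      destruct (decP (inQ q K x')) as [[m0 Hm0]|nq].
      * right. exists m0. split; auto.
        apply (lim_bounds yh ys 0 (rr K m0) Hys). intros n. unfold yh.
        destruct (decP (t n = x')) as [en|en]; [|pose proof (rr_pos K m0); lra].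
        destruct (Pst_top q j (u n) (Hu n)) as [e|_].
        { fold K y in e |- *. unfold y. fold K. rewrite e. pose proof (rr_pos K m0); lra. }
        pose proof (Hu n) as Hun. simpl in Hun. destruct Hun as [_ [_ [e|[m [Hm Hb]]]]].
        { unfold y. fold K in e |- *. rewrite e. pose proof (rr_pos K m0); lra. }
        fold K in Hm, Hb. unfold t in en. rewrite en, Hm0 in Hm.
        assert (m0 = m) by (apply (adm_inj q Hq K); [unfold K; lia| exact Hm]). subst m.
        unfold y. exact Hb.
      * left. symmetry. assert (0 <= ys <= 0); [|lra].
        apply (lim_bounds yh ys 0 0 Hys). intros n. unfold yh.
        destruct (decP (t n = x')) as [en|en]; [|lra].
        destruct (Pst_top q j (u n) (Hu n)) as [e|i].
        { unfold y. fold K in e |- *. rewrite e. lra. }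
        exfalso. apply nq. fold K in i. unfold t in en. rewrite <- en. exact i.
    + intros eps He. destruct (theta_cont (eps/3) ltac:(lra)) as [d [Hd Hd']].
      destruct (Hconv (eps/3) ltac:(lra)) as [N1 HN1].
      destruct (Hys d Hd) as [N2 HN2].
      destruct (Hc (eps/3) ltac:(lra)) as [N3 HN3].
      assert (Hsep : forall n, (N3 <= n)%nat -> t n <> x' -> inQ q K (t n) ->
                 theta (rr K (idx q K (t n))) (y n) 0 <= eps/3).
      { intros n Hn ne iq.
        assert (Hpos : 0 < rhost q j (t n) x').
        { destruct (Rle_lt_dec (rhost q j (t n) x') 0) as [h|h]; auto.
          exfalso. apply ne. apply (rhost_def q j); auto.
          pose proof (rhost_nonneg q j (t n) x'). lra. }
        destruct (Hconv _ Hpos) as [N' HN']. set (m := Nat.max N3 N').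
        specialize (HN' m ltac:(unfold m; lia)).
        assert (ne' : t n <> t m) by (intros E; rewrite <- E in HN'; lra).
        specialize (HN3 n m Hn ltac:(unfold m; lia)).
        rewrite rhost_S in HN3. fold K in HN3.
        pose proof (rstep_sep q K (rhost q j) (t n) (t m) (y n) (y m) (rhost_nonneg _ _ _ _) iq ne').
        unfold t, y in H, HN3 |- *. lra. }
      exists (Nat.max N1 (Nat.max N2 N3)). intros n Hn.
      specialize (HN1 n ltac:(lia)). specialize (HN2 n ltac:(lia)).
      change (rhost q (S j) (u n) z < eps). rewrite rhost_S. fold K. rewrite Htz, HzK.
      change (trunc K (u n)) with (t n). change (u n K) with (y n).
      unfold yh in HN2. destruct (decP (t n = x')) as [en|en].
      * rewrite en. rewrite en in HN1. unfold rstep.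
        destruct (decP (inQ q K x')).
        -- destruct (Nat.eq_dec (idx q K x') (idx q K x')) as [_|c]; [|congruence].
           apply Rlt_trans with (eps/3); [|lra]. apply Hd'; auto using rr_pos, rr_le1.
        -- rewrite rhost_refl. lra.
      * rewrite Rminus_0_l, Rabs_Ropp in HN2.
        eapply Rle_lt_trans. apply (rstep_ub _ _ _ _ _ _ _ (eps/3) (rhost q j (t n) x') (eps/3)); auto; try lra.
        -- intros iq. apply Hsep; auto. lia.
        -- intros iq. apply Rlt_le, Hd'; auto using rr_pos, rr_le1.
           rewrite Rminus_0_l, Rabs_Ropp. exact HN2.
        -- lra.
Qed.

Lemma inv_small e : 0 < e -> exists N, / (INR N + 1) < e.
Proof.
  intros He. destruct (archimed_cor1 e He) as [N [H1 H2]]. exists N.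
  apply Rle_lt_trans with (/ INR N); auto.
  apply Rinv_le_contravar. apply lt_0_INR; auto. lra.
Qed.

Lemma inv_mono n N : (N <= n)%nat -> / (INR n + 1) <= / (INR N + 1).
Proof.
  intros H. apply Rinv_le_contravar. pose proof (pos_INR N); lra.
  apply le_INR in H; lra.
Qed.

Lemma inv_pos n : 0 < / (INR n + 1).
Proof. apply Rinv_0_lt_compat. pose proof (pos_INR n); lra. Qed.

Lemma abs_tri a b c : Rabs (a - c) <= Rabs (a - b) + Rabs (b - c).
Proof. replace (a - c) with ((a - b) + (b - c)) by ring. apply Rabs_triang. Qed.

Lemma abs0 a b : Rabs (a - b) <= 0 -> a = b.
Proof. unfold Rabs; destruct Rcase_abs; lra. Qed.

Theorem lemma4p8 (q : nat -> nat -> seqR) (Hq : admissible q)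
  (X : Type) (dX : X -> X -> R) (j : seqR -> X) (HX : is_completion q dX j)
  (k : nat) (hk : (1 <= k)%nat) :
  (forall z, Pinf q z -> forall eps, 0 < eps -> exists delta, 0 < delta /\
     forall w, Pinf q w -> rhoinf q z w < delta -> Rabs (pi k z - pi k w) < eps) /\
  exists f : X -> R,
    (forall x eps, 0 < eps -> exists delta, 0 < delta /\
       forall y, dX x y < delta -> Rabs (f x - f y) < eps) /\
    (forall z, Pinf q z -> f (j z) = pi k z) /\
    (forall x, ~ (exists z, PP q k z /\ x = j z) -> exists m, f x = pi k (q k m)).
Proof.
  destruct k as [|c]; [lia|].
  destruct HX as [[Dnn [Ddef [Dsym Dtri]]] [_ [Hiso Hdense]]].
  assert (Plip : forall z w, Pinf q z -> Pinf q w ->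
            Rabs (pi (S c) z - pi (S c) w) <= 2 * rhoinf q z w).
  { intros z w Hz Hw. destruct (common q z w Hz Hw c) as [L [HL [Hz' Hw']]].
    rewrite (rhoinf_eq q L z w Hz' Hw'). unfold pi; simpl. apply coord_lip; auto. }
  split.
  { intros z Hz eps He. exists (eps/2). split; [lra|]. intros w Hw Hr.
    pose proof (Plip z w Hz Hw). lra. }
  assert (Hch : forall x n, {z | Pinf q z /\ dX x (j z) < / (INR n + 1)}).
  { intros x n. apply constructive_indefinite_description. apply Hdense. apply inv_pos. }
  set (zs := fun x n => proj1_sig (Hch x n)).
  assert (Hzs : forall x n, Pinf q (zs x n) /\ dX x (j (zs x n)) < / (INR n + 1)).
  { intros x n. unfold zs. destruct (Hch x n); auto. }
  assert (Hl : forall x, {l | forall eps, 0 < eps -> exists N, forall n, (N <= n)%nat ->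
                  Rabs (pi (S c) (zs x n) - l) < eps}).
  { intros x. apply constructive_indefinite_description. apply cauchy_R.
    intros eps He. destruct (inv_small (eps/4) ltac:(lra)) as [N HN]. exists N.
    intros n m Hn Hm. destruct (Hzs x n) as [Pn Dn]. destruct (Hzs x m) as [Pm Dm].
    pose proof (Plip _ _ Pn Pm). rewrite <- Hiso in H by auto.
    pose proof (Dtri (j (zs x n)) x (j (zs x m))). rewrite (Dsym (j (zs x n)) x) in H0.
    pose proof (inv_mono n N Hn). pose proof (inv_mono m N Hm). lra. }
  set (f := fun x => proj1_sig (Hl x)).
  assert (Hf : forall x eps, 0 < eps -> exists N, forall n, (N <= n)%nat ->
                  Rabs (pi (S c) (zs x n) - f x) < eps).
  { intros x. unfold f. destruct (Hl x); auto. }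
  assert (K1 : forall x w, Pinf q w -> Rabs (f x - pi (S c) w) <= 2 * dX x (j w)).
  { intros x w Hw. apply Rle_plus_epsilon. intros e He.
    destruct (Hf x (e/2) ltac:(lra)) as [N1 HN1].
    destruct (inv_small (e/4) ltac:(lra)) as [N2 HN2].
    set (n := Nat.max N1 N2). specialize (HN1 n ltac:(unfold n; lia)).
    destruct (Hzs x n) as [Pn Dn]. pose proof (inv_mono n N2 ltac:(unfold n; lia)).
    pose proof (Plip _ _ Pn Hw). rewrite <- Hiso in H0 by auto.
    pose proof (Dtri (j (zs x n)) x (j w)). rewrite (Dsym (j (zs x n)) x) in H1.
    pose proof (abs_tri (f x) (pi (S c) (zs x n)) (pi (S c) w)).
    rewrite Rabs_minus_sym in HN1. lra. }
  exists f. split; [|split].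
  - intros x eps He. exists (eps/2). split; [lra|]. intros y Hy.
    assert (Rabs (f x - f y) <= 2 * dX x y).
    { apply Rle_plus_epsilon. intros e He'.
      destruct (Hdense y (e/4) ltac:(lra)) as [w [Hw Dw]].
      pose proof (K1 x w Hw). pose proof (K1 y w Hw).
      pose proof (Dtri x y (j w)).
      pose proof (abs_tri (f x) (pi (S c) w) (f y)).
      rewrite (Rabs_minus_sym (pi (S c) w)) in H2. lra. }
    lra.
  - intros z Hz. apply abs0. pose proof (K1 (j z) z Hz).
    rewrite (proj2 (Ddef (j z) (j z)) eq_refl) in H. lra.
  - intros x Hx.
    assert (Hdelta : exists delta, 0 < delta /\ forall w, Pst q c w -> delta <= dX x (j w)).
    { apply NNPP. intros H.
      assert (Hex : forall n, exists w, Pst q c w /\ dX x (j w) < / (INR n + 1)).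
      { intros n. apply NNPP. intros Hn. apply H. exists (/ (INR n + 1)). split; [apply inv_pos|].
        intros w Hw. apply Rnot_lt_le. intros Hlt. apply Hn. exists w; auto. }
      assert (Hch2 : forall n, {w | Pst q c w /\ dX x (j w) < / (INR n + 1)})
        by (intros n; apply constructive_indefinite_description, Hex).
      set (ws := fun n => proj1_sig (Hch2 n)).
      assert (Hws : forall n, Pst q c (ws n) /\ dX x (j (ws n)) < / (INR n + 1))
        by (intros n; unfold ws; destruct (Hch2 n); auto).
      assert (PI : forall w, Pst q c w -> Pinf q w).
      { intros w Hw. exists (S c). split; [lia| exact Hw]. }
      destruct (complete q Hq c ws (fun n => proj1 (Hws n))) as [z [Hz Hconv]].
      { intros eps He. destruct (inv_small (eps/2) ltac:(lra)) as [N HN]. exists N.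
        intros n m Hn Hm. destruct (Hws n) as [Pn Dn]. destruct (Hws m) as [Pm Dm].
        rewrite <- (rhoinf_eq q c _ _ Pn Pm), <- Hiso by auto.
        pose proof (Dtri (j (ws n)) x (j (ws m))). rewrite (Dsym (j (ws n)) x) in H0.
        pose proof (inv_mono n N Hn). pose proof (inv_mono m N Hm). lra. }
      apply Hx. exists z. split; [exact Hz|].
      apply Ddef. apply Rle_antisym; [|apply Dnn].
      apply Rle_plus_epsilon. intros e He.
      destruct (Hconv (e/2) ltac:(lra)) as [N1 HN1].
      destruct (inv_small (e/2) ltac:(lra)) as [N2 HN2].
      set (n := Nat.max N1 N2). specialize (HN1 n ltac:(unfold n; lia)).
      destruct (Hws n) as [Pn Dn]. pose proof (inv_mono n N2 ltac:(unfold n; lia)).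
      rewrite <- (rhoinf_eq q c _ _ Pn Hz), <- Hiso in HN1 by auto.
      pose proof (Dtri x (j (ws n)) (j z)). lra. }
    destruct Hdelta as [delta [Hd Hdel]].
    destruct (Hdense x (delta/4) ltac:(lra)) as [w0 [Hw0 D0]].
    destruct (Pinf_Pst q w0 Hw0) as [L0 HL0].
    assert (Hw0' : Pst q (Nat.max c L0) w0) by (apply (Pst_mono q L0); auto; lia).
    destruct (minG q Hq c (Nat.max c L0) w0 ltac:(lia) Hw0') as [Hc|[m Hm]].
    { pose proof (Hdel w0 Hc). lra. }
    exists m. symmetry. apply abs0. apply Rle_plus_epsilon. intros e He.
    destruct (Hdense x (Rmin (delta/4) (e/2))) as [w [Hw Dw]].
    { apply Rmin_glb_lt; lra. }
    assert (Dw1 : dX x (j w) < delta/4) by (eapply Rlt_le_trans; [exact Dw| apply Rmin_l]).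
    assert (Dw2 : dX x (j w) < e/2) by (eapply Rlt_le_trans; [exact Dw| apply Rmin_r]).
    destruct (common q w0 w Hw0 Hw c) as [L [HL [P0 Pw]]].
    assert (Heq : trunc (S c) w = trunc (S c) w0).
    { apply NNPP. intros ne.
      pose proof (treeT q c L w0 w HL P0 Pw (fun E => ne (eq_sym E))).
      assert (Pp : Pst q c (trunc (S c) w0)) by (rewrite Hm; apply adm_P; auto).
      assert (PpL : Pst q L (trunc (S c) w0)) by (apply (Pst_mono q c); auto).
      rewrite <- (rhoinf_eq q L _ _ P0 PpL), <- (rhoinf_eq q L _ _ P0 Pw) in H.
      assert (PI : forall v, Pst q c v -> Pinf q v).
      { intros v Hv. exists (S c). split; [lia| exact Hv]. }
      rewrite <- !Hiso in H by (auto; apply PI; auto).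
      pose proof (Hdel _ Pp).
      pose proof (Dtri x (j w0) (j (trunc (S c) w0))).
      pose proof (Dtri (j w0) x (j w)). rewrite (Dsym (j w0) x) in H2.
      lra. }
    pose proof (K1 x w Hw).
    assert (E : pi (S c) w = pi (S c) (q (S c) m)).
    { unfold pi; simpl. rewrite <- Hm, <- Heq. rewrite trunc_at by lia. reflexivity. }
    rewrite <- E, Rabs_minus_sym. lra.
Qed.
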